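(* Let $G$ be an ADMG on $n$ vertices, and suppose there are $m$ distinct vertex subsets $V_1,\dots,V_m$ with $|V_i|=3$ such that for each $i$ the vertices of $V_i$ can be ordered as $(a_i,b_i,c_i)$ so that $G$ contains the edges $a_i\to b_i$, $b_i\to c_i$ and $b_i\leftrightarrow c_i$. Then $|\mathrm{MEC}(G)|\ge 2^{m/(3n)}$.
   Context: An ADMG (acyclic directed mixed graph) has directed edges $v\to w$ forming no directed cycle and bidirected edges $v\leftrightarrow w$, $v\ne w$. Markov equivalence is defined via d-separation: a path between $a\ne b$ is a sequence of vertices (repeats allowed) with specified edges (directed either way, or bidirected) between consecutive ones; an internal vertex is a collider if both adjacent path-edges have an arrowhead at it; the path is active given $Z$ if every internal non-collider is outside $Z$ and every collider is in $Z$ or has a descendant (itself or a vertex reachable by a directed path) in $Z$; $a,b$ are d-separated given $Z$ if no active path exists. Two graphs are Markov equivalent if they have the same d-separations. $\mathrm{MEC}(G)$ is the set of ADMGs on the same vertex set Markov equivalent to $G$. *)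

(* Defs.v *)
From HB Require Import structures.
From mathcomp Require Import all_boot all_order all_algebra.
From mathcomp Require Import boolp reals exp.
Set Implicit Arguments. Unset Strict Implicit. Unset Printing Implicit Defensive.

(* An ADMG on vertex set 'I_n : D = set of directed edges (u,w) meaning u -> w,
   B = set of bidirected edges, stored symmetrically: (u,w) \in B iff (w,u) \in B. *)
Definition dedge n (D : {set 'I_n * 'I_n}) : rel 'I_n := fun u w => (u, w) \in D.

Definition is_admg n (D B : {set 'I_n * 'I_n}) : Prop :=
  (* no directed cycle (also excludes directed self-loops) *)
  (forall u w, (u, w) \in D -> ~~ connect (dedge D) w u) /\
  (forall u w, (u, w) \in B -> u != w) /\
  (forall u w, (u, w) \in B -> (w, u) \in B).

(* kind of a path edge between consecutive vertices u, w:
   Fwd: u -> w, Bwd: u <- w, Bi: u <-> w *)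
Inductive ekind := Fwd | Bwd | Bi.

Definition edge_ok n (D B : {set 'I_n * 'I_n}) (k : ekind) (u w : 'I_n) : bool :=
  match k with
  | Fwd => (u, w) \in D
  | Bwd => (w, u) \in D
  | Bi => (u, w) \in B
  end.

Definition head_at_end (k : ekind) : bool := if k is Bwd then false else true.
Definition head_at_start (k : ekind) : bool := if k is Fwd then false else true.

(* A path (repeats allowed) from a to b: vertices vs = [v_0; ...; v_L],
   edges ks = [k_0; ...; k_{L-1}], k_i an edge of the graph between v_i and v_{i+1}. *)
Definition is_path n (D B : {set 'I_n * 'I_n}) (a b : 'I_n)
    (vs : seq 'I_n) (ks : seq ekind) : Prop :=
  size vs = (size ks).+1 /\
  nth a vs 0 = a /\ nth a vs (size ks) = b /\
  (forall i, i < size ks -> edge_ok D B (nth Fwd ks i) (nth a vs i) (nth a vs i.+1)).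

Definition collider (ks : seq ekind) (j : nat) : bool :=
  head_at_end (nth Fwd ks j.-1) && head_at_start (nth Fwd ks j).

Definition descendant n (D : {set 'I_n * 'I_n}) (v w : 'I_n) : bool :=
  connect (dedge D) v w.

Definition active_path n (D B : {set 'I_n * 'I_n}) (Z : {set 'I_n}) (a b : 'I_n)
    (vs : seq 'I_n) (ks : seq ekind) : Prop :=
  is_path D B a b vs ks /\
  forall j, 0 < j -> j < size ks ->
    if collider ks j
    then exists2 z, z \in Z & descendant D (nth a vs j) z
    else nth a vs j \notin Z.

Definition dsep n (D B : {set 'I_n * 'I_n}) (a b : 'I_n) (Z : {set 'I_n}) : Prop :=
  ~ exists vs ks, active_path D B Z a b vs ks.

Definition markov_equiv n (D B D' B' : {set 'I_n * 'I_n}) : Prop :=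
  forall (a b : 'I_n) (Z : {set 'I_n}), a != b -> (dsep D B a b Z <-> dsep D' B' a b Z).

Definition MEC n (D B : {set 'I_n * 'I_n}) : {set {set 'I_n * 'I_n} * {set 'I_n * 'I_n}} :=
  [set G' | `[< is_admg G'.1 G'.2 /\ markov_equiv D B G'.1 G'.2 >]].

(* Main.v *)
Require Import Defs.
From HB Require Import structures.
From mathcomp Require Import all_boot all_order all_algebra.
From mathcomp Require Import boolp reals exp zify.
Import Order.TTheory GRing.Theory Num.Theory.
Set Implicit Arguments. Unset Strict Implicit. Unset Printing Implicit Defensive.

Section Walks.
Variable n : nat.
Implicit Types (D B : {set 'I_n * 'I_n}) (Z : {set 'I_n}).

Definition cnd D Z (p : option bool) (k : ekind) (x : 'I_n) : Prop :=
  match p with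
  | None => True
  | Some h => if h && head_at_start k then exists2 z, z \in Z & descendant D x z
              else x \notin Z
  end.

Fixpoint W D B Z (p : option bool) (x b : 'I_n) (vs : seq 'I_n) (ks : seq ekind) : Prop :=
  match vs, ks with
  | [::], [::] => x = b
  | v :: vs', k :: ks' => edge_ok D B k x v /\ cnd D Z p k x /\
                          W D B Z (Some (head_at_end k)) v b vs' ks'
  | _, _ => False
  end.

Lemma W_iff D B Z (d b : 'I_n) ks : forall p x vs,
  W D B Z p x b vs ks <->
  [/\ size vs = size ks,
      (forall i, i < size ks -> edge_ok D B (nth Fwd ks i) (nth d (x::vs) i) (nth d (x::vs) i.+1)),
      nth d (x::vs) (size ks) = b &
      (forall j, j < size ks -> cnd D Z (if j is j'.+1 then Some (head_at_end (nth Fwd ks j')) else p)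
                                   (nth Fwd ks j) (nth d (x::vs) j))].
Proof.
elim: ks => [|k ks IH] p x [|v vs] /=.
- by split=> [->|[]].
- by split=> [[]|[]].
- by split=> [[]|[]].
split.
- move=> [e [c /IH [s E N C]]]; split=> //; first by rewrite s.
  + by case=> [|i] //= Hi; apply: E.
  + case=> [|j] //= Hj; have := C _ Hj; case: j Hj => [|j] Hj //=.
- move=> [[s] E N C]; split; first exact: (E 0%N).
  split; first exact: (C 0%N).
  apply/IH; split=> //.
  + by move=> i Hi; apply: (E i.+1).
  + by move=> j Hj; have := C j.+1 Hj; case: j Hj.
Qed.

Lemma active_W D B Z a b vs ks :
  active_path D B Z a b vs ks <-> exists2 vs', vs = a :: vs' & W D B Z None a b vs' ks.
Proof.
split.
- move=> [[s [h0 [hb E]]] C].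
  case: vs s h0 hb E C => [|v vs] //= [s] h0 hb E C; subst v.
  exists vs => //; apply/(W_iff _ _ _ a); split=> //.
  case=> [|j] // Hj; have := C j.+1 isT Hj; rewrite /collider /=.
  by case: ifP.
- move=> [vs' -> /(W_iff _ _ _ a) [s E N C]]; split.
  + by split; [rewrite /= s|split].
  + move=> [|j] // _ Hj; have := C _ Hj; rewrite /collider /=.
    by case: ifP.
Qed.

Lemma cnd_eq D1 D2 Z p k x : (forall u w, connect (dedge D1) u w = connect (dedge D2) u w) ->
  cnd D1 Z p k x -> cnd D2 Z p k x.
Proof.
move=> Hc; case: p => //= h; case: ifP => // _ [z Hz Hd]; exists z => //.
by rewrite /descendant -Hc.
Qed.

Lemma W_mono D1 D2 B Z : D1 \subset D2 ->
  (forall u w, connect (dedge D1) u w = connect (dedge D2) u w) ->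
  forall ks p x b vs, W D1 B Z p x b vs ks -> W D2 B Z p x b vs ks.
Proof.
move=> sub Hc; elim=> [|k ks IH] p x b [|v vs] //= [e [c w]]; split; last split.
- by case: k e c w => //= e _ _; apply: (subsetP sub).
- exact: cnd_eq Hc c.
- exact: IH.
Qed.

Lemma W_surg D1 D2 B Z :
  (forall u w, (u, w) \in D2 -> (u, w) \notin D1 ->
     exists2 bb, ((u, bb) \in D1) && ((bb, w) \in D1) & (bb, w) \in B) ->
  (forall u w, (u, w) \in B -> (w, u) \in B) ->
  (forall u w, connect (dedge D1) u w = connect (dedge D2) u w) ->
  forall ks p x b vs, W D2 B Z p x b vs ks -> exists vs', exists ks', W D1 B Z p x b vs' ks'.
Proof.
move=> Hw Bs Hc; elim=> [|k ks IH] p x b [|v vs] //=.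
- by move=> ->; exists [::], [::].
move=> [e [c /IH [vs' [ks' w']]]].
have c' : cnd D1 Z p k x by apply: cnd_eq c => u w; rewrite Hc.
case E1: (edge_ok D1 B k x v).
  by exists (v :: vs'), (k :: ks').
case: k e c c' E1 w' => //= e c c' E1 w'.
- have [bb /andP[h1 h2] h3] := Hw _ _ e (negbT E1).
  case Zb: (bb \in Z).
  + exists (bb :: v :: vs'), (Fwd :: Bi :: ks') => /=.
    do 4 split => //; exists bb => //; exact: connect0.
  + exists (bb :: v :: vs'), (Fwd :: Fwd :: ks') => /=.
    by do 4 split => //; rewrite Zb.
- have [bb /andP[h1 h2] h3] := Hw _ _ e (negbT E1).
  case Zb: (bb \in Z).
  + exists (bb :: v :: vs'), (Bi :: Bwd :: ks') => /=.
    split; first exact: Bs.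
    split; first exact: c'.
    split=> //; split=> //; exists bb => //; exact: connect0.
  + exists (bb :: v :: vs'), (Bwd :: Bwd :: ks') => /=.
    by do 4 split => //; rewrite Zb.
- by rewrite e in E1.
Qed.

Lemma conn_eq D1 D2 B : D1 \subset D2 ->
  (forall u w, (u, w) \in D2 -> (u, w) \notin D1 ->
     exists2 bb, ((u, bb) \in D1) && ((bb, w) \in D1) & (bb, w) \in B) ->
  forall u w, connect (dedge D1) u w = connect (dedge D2) u w.
Proof.
move=> sub Hw u w; apply/idP/idP.
- apply: connect_sub => x y /= xy; apply: connect1; exact: (subsetP sub).
- apply: connect_sub => x y /= xy; case E: ((x, y) \in D1); first exact: connect1.
  have [bb /andP[h1 h2] _] := Hw _ _ xy (negbT E).
  by apply: (connect_trans (connect1 (e:=dedge D1) h1)); apply: connect1.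
Qed.

Lemma dsep_eq D1 D2 B :
  D1 \subset D2 ->
  (forall u w, (u, w) \in D2 -> (u, w) \notin D1 ->
     exists2 bb, ((u, bb) \in D1) && ((bb, w) \in D1) & (bb, w) \in B) ->
  (forall u w, (u, w) \in B -> (w, u) \in B) ->
  forall a b Z, dsep D1 B a b Z <-> dsep D2 B a b Z.
Proof.
move=> sub Hw Bs.
have Hc : forall u w, connect (dedge D1) u w = connect (dedge D2) u w.
  move=> u w; apply/idP/idP.
  - apply: connect_sub => x y /= xy; apply: connect1; exact: (subsetP sub).
  - apply: connect_sub => x y /= xy; case E: ((x, y) \in D1); first exact: connect1.
    have [bb /andP[h1 h2] _] := Hw _ _ xy (negbT E).
    by apply: (connect_trans (connect1 (e:=dedge D1) h1)); apply: connect1.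
move=> a b Z; rewrite /dsep; split=> H [vs [ks /active_W [vs' E Hw']]]; apply: H.
- have [vs2 [ks2 W2]] := W_surg Hw Bs Hc Hw'.
  by exists (a :: vs2), ks2; apply/active_W; exists vs2.
- exists vs, ks; apply/active_W; exists vs' => //.
  exact: (W_mono sub Hc).
Qed.
End Walks.

Section Sel.
Variable n : nat.
Variables D B : {set 'I_n * 'I_n}.
Hypothesis acyc : forall u w, (u, w) \in D -> ~~ connect (dedge D) w u.

Definition wit (u w bb : 'I_n) := [&& (u, bb) \in D, (bb, w) \in D & (bb, w) \in B].

Definition mu (e : 'I_n * 'I_n) :=
  #|[set x | connect (dedge D) e.1 x && connect (dedge D) x e.2]|.

Lemma mu_lt a b c : (a, b) \in D -> (b, c) \in D ->
  mu (a, b) < mu (a, c) /\ mu (b, c) < mu (a, c).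
Proof.
move=> ab bc; have cab := connect1 (e:=dedge D) ab; have cbc := connect1 (e:=dedge D) bc.
split; apply: proper_card; apply/properP; split.
- apply/subsetP=> x; rewrite !inE /= => /andP[h1 h2]; rewrite h1 /=.
  exact: connect_trans h2 cbc.
- exists c; rewrite !inE /= ?connect0 ?andbT; first exact: connect_trans cab cbc.
  by rewrite (negbTE (acyc bc)) andbF.
- apply/subsetP=> x; rewrite !inE /= => /andP[h1 h2]; rewrite h2 andbT.
  exact: connect_trans cab h1.
- exists a; rewrite !inE /= ?connect0 /=; first exact: connect_trans cab cbc.
  by rewrite (negbTE (acyc ab)).
Qed.

Lemma b3le (b1 b2 b3 : bool) k : b1 + (b2 + (b3 + k)) <= k + 3.
Proof. by case: b1; case: b2; case: b3 => /=; lia. Qed.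

Lemma select N : forall Q : {set 'I_n * 'I_n}, #|Q| <= N ->
  (forall q, q \in Q -> exists bb, wit q.1 q.2 bb) ->
  exists S : {set 'I_n * 'I_n}, [/\ S \subset Q, #|Q| <= 3 * #|S| &
    forall s, s \in S -> exists bb, [&& wit s.1 s.2 bb, (s.1, bb) \notin S & (bb, s.2) \notin S]].
Proof.
elim: N => [|N IH] Q HQ Hw.
  exists set0; split; rewrite ?sub0set ?cards0 //; last by move=> s; rewrite inE.
have [Q0|[e0 e0Q]] := set_0Vmem Q.
  exists set0; split; rewrite ?sub0set ?cards0 ?Q0 ?cards0 //.
  by move=> s; rewrite inE.
case: (@arg_maxnP _ e0 (mem Q) mu e0Q) => e eQ emax.
have [bb wb] := Hw e eQ.
move: (wb) => /and3P[h1 h2 h3].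
have [lt1 lt2] := mu_lt h1 h2.
case: e eQ emax wb h1 h2 h3 lt1 lt2 => e1 e2 eQ emax wb h1 h2 h3 lt1 lt2 /=.
set Q' := Q :\ (e1, e2) :\ (e1, bb) :\ (bb, e2).
have sQ' : Q' \subset Q.
  by apply/subsetP=> x; rewrite !inE => /and4P[_ _ _].
have cQ : #|Q| <= #|Q'| + 3.
  rewrite [#|Q|](cardsD1 (e1, e2)) [#|Q :\ _|](cardsD1 (e1, bb)).
  rewrite [#|Q :\ _ :\ _|](cardsD1 (bb, e2)).
  by apply: b3le.
have lQ : #|Q'| <= N.
  have : #|Q'| < #|Q|; last by move=> h; rewrite -ltnS; apply: leq_trans h HQ.
  apply: proper_card; apply/properP; split=> //; exists (e1, e2) => //.
  by rewrite !inE eqxx !andbF.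
have [S' [sS' cS' wS']] := IH Q' lQ (fun q qQ => Hw q (subsetP sQ' q qQ)).
have eS' : (e1, e2) \notin S'.
  by apply/negP => /(subsetP sS'); rewrite !inE eqxx !andbF.
exists ((e1, e2) |: S'); split.
- rewrite subUset sub1set; apply/andP; split => //; exact: subset_trans sS' sQ'.
- rewrite cardsU1 eS' (_ : true + #|S'| = #|S'|.+1) //; apply: leq_trans cQ _; by rewrite mulnS addnC leq_add2l.
- move=> s; rewrite !inE => /orP[/eqP -> | sS].
  + exists bb; rewrite wb /= !inE !negb_or.
    apply/andP; split.
    * apply/andP; split; first by apply/negP => /eqP [e]; move: lt1; rewrite e ltnn.
      by apply/negP => /(subsetP sS'); rewrite !inE eqxx /= ?andbF.
    * apply/andP; split; first by apply/negP => /eqP e; move: lt2; rewrite e ltnn.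
      by apply/negP => /(subsetP sS'); rewrite !inE eqxx /= ?andbF.
  + have [bb' /and3P[wb' n1 n2]] := wS' s sS; exists bb'.
    rewrite wb' !inE !negb_or n1 n2 !andbT /=.
    move: (wb') => /and3P[k1 k2 _]; have [l1 l2] := mu_lt k1 k2.
    have ms : mu s <= mu (e1, e2).
      by apply: emax; apply: (subsetP sQ'); apply: (subsetP sS').
    apply/andP; split; apply/negP => /eqP E.
    * by move: l1; rewrite E => /leq_trans/(_ ms); rewrite ltnn.
    * by move: l2; rewrite E => /leq_trans/(_ ms); rewrite ltnn.
Qed.
End Sel.

Lemma card_MEC_ge (n m : nat) (D B : {set 'I_n * 'I_n}) (V : 'I_m -> {set 'I_n}) :
  is_admg D B ->
  injective V ->
  (forall i, #|V i| = 3%N /\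
     exists a b c, V i = [set a; b; c] /\
       (a, b) \in D /\ (b, c) \in D /\ (b, c) \in B) ->
  exists s, m <= 3 * s * n /\ 2 ^ s <= #|MEC D B|.
Proof.
move=> [acyc [Bne Bs]] Vinj HV.
pose Tr := [set t : 'I_n * 'I_n * 'I_n | wit D B t.1.1 t.2 t.1.2].
pose Q := [set (t.1.1, t.2) | t in Tr].
have mTr : m <= #|Tr|.
  pose f (t : 'I_n * 'I_n * 'I_n) := [set t.1.1; t.1.2; t.2].
  have : V @: setT \subset f @: Tr.
    apply/subsetP=> X /imsetP [i _ ->].
    have [_ [a [b [c [-> [h1 [h2 h3]]]]]]] := HV i.
    apply/imsetP; exists (a, b, c) => //; rewrite inE /wit /=.
    by rewrite h1 h2 h3.
  move/subset_leq_card; rewrite card_imset // cardsT card_ord => h.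
  exact: leq_trans h (leq_imset_card _ _).
have TrQ : #|Tr| <= #|Q| * n.
  pose g (t : 'I_n * 'I_n * 'I_n) := ((t.1.1, t.2), t.1.2).
  have ginj : injective g by move=> [[a b] c] [[a' b'] c'] /= [-> -> ->].
  rewrite -(card_imset Tr ginj).
  apply: (@leq_trans #|setX Q [set: 'I_n]|); last by rewrite cardsX cardsT card_ord.
  apply: subset_leq_card; apply/subsetP=> x /imsetP [t tT ->].
  by rewrite inE /= inE; apply/andP; split => //; apply/imsetP; exists t.
have Qw : forall q, q \in Q -> exists bb, wit D B q.1 q.2 bb.
  by move=> q /imsetP [t]; rewrite inE => wt ->; exists t.1.2.
have [S [sSQ cS wS]] := select acyc (leqnn #|Q|) Qw.
exists #|S|; split.
  apply: leq_trans mTr _; apply: leq_trans TrQ _; rewrite leq_mul2r; apply/orP; right.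
  exact: cS.
pose D' := D :\: S.
have key : forall D2 : {set 'I_n * 'I_n}, D' \subset D2 -> D2 \subset D' :|: S ->
    forall a b Z, dsep D' B a b Z <-> dsep D2 B a b Z.
  move=> D2 s1 s2; apply: dsep_eq => // u w uw nuw.
  have : (u, w) \in S.
    by move: (subsetP s2 _ uw); rewrite inE (negbTE nuw).
  move=> /wS [bb /and3P [/and3P [k1 k2 k3] n1 n2]]; exists bb => //.
  by rewrite !inE /= n1 n2 k1 k2.
have conn : forall D2 : {set 'I_n * 'I_n}, D' \subset D2 -> D2 \subset D' :|: S ->
    forall u w, connect (dedge D') u w = connect (dedge D2) u w.
  move=> D2 s1 s2; apply: conn_eq (B) s1 _ => u w uw nuw.
  have : (u, w) \in S.
    by move: (subsetP s2 _ uw); rewrite inE (negbTE nuw).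
  move=> /wS [bb /and3P [/and3P [k1 k2 k3] n1 n2]]; exists bb => //.
  by rewrite !inE /= n1 n2 k1 k2.
have sD1 : D' \subset D by apply/subsetP => x; rewrite inE => /andP[].
have sD2 : D \subset D' :|: S.
  by apply/subsetP => x xD; rewrite !inE xD; case: (x \in S).
pose F (T : {set 'I_n * 'I_n}) := (D' :|: T, B).
have FM : forall T : {set 'I_n * 'I_n}, T \subset S -> F T \in MEC D B.
  move=> T sT.
  have s1 : D' \subset D' :|: T by apply: subsetUl.
  have s2 : D' :|: T \subset D' :|: S by apply: setUS.
  rewrite inE; apply/asboolP; split; last first.
    move=> a b Z _ /=; rewrite -(key _ sD1 sD2) (key _ s1 s2); done.
  split=> //= u w uw.
  rewrite -(conn _ s1 s2) (conn _ sD1 sD2).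
  move: uw; rewrite inE => /orP [uw|uw].
    by apply: acyc; move: uw; rewrite inE => /andP[].
  have [bb /and3P [/and3P [k1 k2 k3] _ _]] := wS _ (subsetP sT _ uw).
  apply/negP => cwu; have /negP := acyc _ _ k1; apply.
  by apply: connect_trans (connect1 (e:=dedge D) k2) cwu.
have Finj : {in powerset S &, injective F}.
  move=> T1 T2; rewrite !inE => s1 s2 [E]; apply/setP => x.
  have := congr1 (fun X : {set 'I_n * 'I_n} => x \in X) E; rewrite !inE.
  case xS : (x \in S); last first.
    have n1 : (x \in T1) = false by apply/negbTE/negP => /(subsetP s1); rewrite xS.
    have n2 : (x \in T2) = false by apply/negbTE/negP => /(subsetP s2); rewrite xS.
    by rewrite n1 n2.
  by rewrite /=.
rewrite -card_powerset -(card_in_imset Finj); apply: subset_leq_card.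
by apply/subsetP => G /imsetP [T]; rewrite inE => sT ->; apply: FM.
Qed.
Local Open Scope ring_scope.

Theorem mainTheorem10 (R : realType) (n m : nat) (D B : {set 'I_n * 'I_n})
    (V : 'I_m -> {set 'I_n}) :
  is_admg D B ->
  injective V ->
  (forall i, #|V i| = 3%N /\
     exists a b c, V i = [set a; b; c] /\
       (a, b) \in D /\ (b, c) \in D /\ (b, c) \in B) ->
  (2 : R) `^ (m%:R / (3 * n)%:R) <= (#|MEC D B|)%:R.
Proof.
move=> adm Vi HV; have [s [ms sM]] := card_MEC_ge adm Vi HV.
have sM' : (2 : R) ^+ s <= (#|MEC D B|)%:R by rewrite -natrX ler_nat.
case: n D B V adm Vi HV ms sM sM' => [|n] D B V adm Vi HV ms sM sM'.
  rewrite muln0 invr0 mulr0 powRr0; apply: le_trans sM'.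
  by rewrite -natrX ler1n expn_gt0.
apply: le_trans sM'; rewrite -powR_mulrn //; apply: ler_powR; first by rewrite ler1n.
rewrite ler_pdivrMr ?ltr0n ?muln_gt0 // -natrM ler_nat.
by rewrite mulnCA mulnA.
Qed.
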